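(* Let $S$ be an epsilon-strongly $G$-graded ring such that $\epsilon_G:=\bigwedge\{\epsilon_g:g\in G\}$ exists and belongs to $B(\mathcal{E}_G)^*$. Then: (i) $\epsilon_GS=\bigoplus_{g\in G}\epsilon_GS_g$ is a strongly $G$-graded ring; (ii) if moreover $S$ is an epsilon-crossed product, then $\epsilon_GS$ is a crossed product.
   Context: $G$ is a group with identity $e$; $S=\bigoplus_{g\in G}S_g$ is an associative unital ring graded by $G$, $R=S_e$, $XY$ denotes finite sums of products. $S$ is epsilon-strongly graded: each ideal $S_gS_{g^{-1}}$ of $R$ has an identity $\epsilon_g$ with $\epsilon_gs=s=s\epsilon_{g^{-1}}$ for $s\in S_g$; $\epsilon_e=1_S$; each $\epsilon_g$ is an idempotent in $Z(R)$. $B(\mathcal{E}_G)$ is the multiplicative semigroup generated by $\{\epsilon_g:g\in G\}$, $B(\mathcal{E}_G)^*=B(\mathcal{E}_G)\setminus\{0\}$, with partial order $a\le b$ iff $a=ab$; $\bigwedge$ denotes the greatest lower bound in this order. A ring is strongly $G$-graded if $A_gA_h=A_{gh}$ for all $g,h$. $S$ is an epsilon-crossed product if for each $g$ there are $s\in S_g$, $t\in S_{g^{-1}}$ with $st=\epsilon_g$, $ts=\epsilon_{g^{-1}}$. A graded unital ring is a crossed product if each homogeneous component contains an invertible element. *)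

(* Defs.v *)
From HB Require Import structures.
From mathcomp Require Import all_boot all_order all_algebra.
From mathcomp Require Import monoid.
Set Implicit Arguments. Unset Strict Implicit. Unset Printing Implicit Defensive.
Import GRing.Theory.
Local Open Scope ring_scope.

(* Subsets of S are predicates S -> Prop; a G-grading is a family
   C : G -> S -> Prop of homogeneous components. *)

Section Defs.
Variables (G : groupType) (S : pzRingType).

Definition prodspan (X Y : S -> Prop) (z : S) : Prop :=
  exists n (a b : 'I_n -> S),
    (forall i, X (a i) /\ Y (b i)) /\ z = \sum_(i < n) a i * b i.

Definition graded_ring (A : S -> Prop) (u : S) (C : G -> S -> Prop) : Prop :=
  [/\
      [/\ A 0, A u,
          (forall a b, A a -> A b -> A (a - b)),
          (forall a b, A a -> A b -> A (a * b)) &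
          (forall a, A a -> u * a = a /\ a * u = a)],
      (forall g, [/\ C g 0,
                     (forall a b, C g a -> C g b -> C g (a - b)) &
                     (forall a, C g a -> A a)]),
      (forall g h a b, C g a -> C h b -> C (g * h)%g (a * b)),
      (forall a, A a -> exists n (gs : 'I_n -> G) (x : 'I_n -> S),
          (forall i, C (gs i) (x i)) /\ a = \sum_(i < n) x i) &
      (forall n (gs : 'I_n -> G) (x : 'I_n -> S), injective gs ->
          (forall i, C (gs i) (x i)) -> \sum_(i < n) x i = 0 ->
          forall i, x i = 0)].

Definition strongly_graded (A : S -> Prop) (u : S) (C : G -> S -> Prop) : Prop :=
  graded_ring A u C /\
  forall g h z, C (g * h)%g z <-> prodspan (C g) (C h) z.

Definition crossed_product (A : S -> Prop) (u : S) (C : G -> S -> Prop) : Prop :=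
  forall g, exists x y, [/\ C g x, A y, x * y = u & y * x = u].

Definition epsilon_strongly_graded (Sg : G -> S -> Prop) (eps : G -> S) : Prop :=
  forall g,
    [/\ prodspan (Sg g) (Sg (g^-1)%g) (eps g),
        (forall x, prodspan (Sg g) (Sg (g^-1)%g) x -> eps g * x = x /\ x * eps g = x) &
        (forall s, Sg g s -> eps g * s = s /\ s * eps (g^-1)%g = s)].

Definition epsilon_crossed_product (Sg : G -> S -> Prop) (eps : G -> S) : Prop :=
  forall g, exists s t, [/\ Sg g s, Sg (g^-1)%g t,
                            s * t = eps g & t * s = eps (g^-1)%g].

(* B(E_G): multiplicative semigroup generated by the eps g *)
Definition inB (eps : G -> S) (x : S) : Prop :=
  exists n (gs : 'I_n.+1 -> G), x = \prod_(i < n.+1) eps (gs i).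

Definition Ble (a b : S) : Prop := a = a * b.

Definition is_meet_eps (eps : G -> S) (m : S) : Prop :=
  [/\ inB eps m,
      (forall g, Ble m (eps g)) &
      (forall b, inB eps b -> (forall g, Ble b (eps g)) -> Ble b m)].

Definition lmulset (m : S) (X : S -> Prop) (z : S) : Prop :=
  exists s, X s /\ z = m * s.

End Defs.

(* Main.v *)
Require Import Defs.
From HB Require Import structures.
From mathcomp Require Import all_boot all_order all_algebra.
From mathcomp Require Import monoid.
Import GRing.Theory.
Local Open Scope ring_scope.

Section Aux.
Variables (G : groupType) (S : pzRingType).

Lemma sum_closed (C : S -> Prop) n (f : 'I_n -> S) :
  C 0 -> (forall a b, C a -> C b -> C (a - b)) ->
  (forall i, C (f i)) -> C (\sum_(i < n) f i).
Proof.
move=> H0 Hs Hf; elim: n f Hf => [|n IH] f Hf; first by rewrite big_ord0.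
rewrite big_ord_recr /=.
have := Hs _ _ (IH (fun i => f (widen_ord (leqnSn n) i)) (fun i => Hf _)) (Hs _ _ H0 (Hf ord_max)).
by rewrite sub0r opprK.

Qed.

End Aux.

Theorem mainTheorem14 (G : groupType) (S : pzRingType)
    (Sg : G -> S -> Prop) (eps : G -> S) (epsG : S) :
  graded_ring (fun _ => True) 1 Sg ->
  epsilon_strongly_graded Sg eps ->
  is_meet_eps eps epsG -> epsG != 0 ->
  strongly_graded (lmulset epsG (fun _ => True)) epsG
                  (fun g => lmulset epsG (Sg g)) /\
  (epsilon_crossed_product Sg eps ->
   crossed_product (lmulset epsG (fun _ => True)) epsG
                   (fun g => lmulset epsG (Sg g))).
Proof.
move=> [_ Hcomp Hmul Hsum Hdir] Heps [HB Hle _] _.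
have Hsc : forall g n (f : 'I_n -> S), (forall i, Sg g (f i)) ->
    Sg g (\sum_(i < n) f i).
  move=> g n f Hf; have [H0 Hs _] := Hcomp g; exact: sum_closed.
have eps1 : forall h, Sg 1%g (eps h).
  move=> h; have [[n [a [b [Hab ->]]]] _ _] := Heps h.
  apply: Hsc => i; have [Ha Hb] := Hab i.
  by have := Hmul _ _ _ _ Ha Hb; rewrite mulgV.
have ident : forall g h s, Sg g s -> s * eps h = eps (g * h)%g * s.
  move=> g h s Hs.
  have st1 : s * eps h = eps (g * h)%g * (s * eps h).
    have [[n [a [b [Hab ->]]]] _ _] := Heps h.
    rewrite !mulr_sumr; apply: eq_bigr => i _.
    have [Ha _] := Hab i.
    have [_ _ H3] := Heps (g * h)%g.
    have [E _] := H3 _ (Hmul _ _ _ _ Hs Ha).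
    by rewrite mulrA mulrA E.
  have st2 : eps (g * h)%g * s = eps (g * h)%g * s * eps h.
    have [[n [a [b [Hab ->]]]] _ _] := Heps (g * h)%g.
    rewrite !mulr_suml; apply: eq_bigr => i _.
    have [_ Hb] := Hab i.
    have Hbs := Hmul _ _ _ _ Hb Hs.
    rewrite (_ : ((g * h)^-1 * g)%g = (h^-1)%g) in Hbs; last by rewrite invgM -mulgA mulVg mulg1.
    have [_ _ H3] := Heps (h^-1)%g.
    have [_ E] := H3 _ Hbs; rewrite invgK in E.
    transitivity (a i * (b i * s * eps h)); first by rewrite E mulrA.
    by rewrite !mulrA.
  by rewrite st1 mulrA -st2.
have [N [gs HG]] := HB.
have absorb : forall m (F : 'I_m -> G), epsG * \prod_(i < m) eps (F i) = epsG.
  elim=> [|m IH] F; first by rewrite big_ord0 mulr1.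
  by rewrite big_ord_recr /= mulrA IH -Hle.
have prodS : forall g m (F : 'I_m -> G) x, Sg g x -> Sg g ((\prod_(i < m) eps (F i)) * x).
  move=> g; elim=> [|m IH] F x Hx; first by rewrite big_ord0 mul1r.
  rewrite big_ord_recr /= -mulrA; apply: IH.
  by have := Hmul _ _ _ _ (eps1 (F ord_max)) Hx; rewrite mul1g.
have identP : forall g m (F : 'I_m -> G) s, Sg g s ->
    s * \prod_(i < m) eps (F i) = (\prod_(i < m) eps (g * F i)%g) * s.
  move=> g; elim=> [|m IH] F s Hs; first by rewrite !big_ord0 mulr1 mul1r.
  rewrite !big_ord_recr /= mulrA IH // -!mulrA; congr (_ * _).
  exact: ident.
have idem : epsG * epsG = epsG by rewrite [X in _ * X]HG absorb.
have eGS : forall g s, Sg g s -> Sg g (epsG * s) by move=> g s Hs; rewrite HG; apply: prodS.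
have eG1 : Sg 1%g epsG.
  rewrite HG big_ord_recr /=; apply: prodS; exact: eps1.
have comm_hom : forall g s, Sg g s -> epsG * s = s * epsG.
  move=> g s Hs.
  have e1 : s * epsG = (\prod_(i < N.+1) eps (g * gs i)%g) * s.
    by rewrite [in LHS]HG; apply: identP.
  have e2 : epsG * s = s * \prod_(i < N.+1) eps ((g^-1) * gs i)%g.
    rewrite [in LHS]HG (identP g) //; congr (_ * _).
    by apply: eq_bigr => i _; rewrite mulgA mulgV mul1g.
  have e4 : epsG * (\prod_(i < N.+1) eps ((g^-1) * gs i)%g) =
            (\prod_(i < N.+1) eps ((g^-1) * gs i)%g) * epsG.
    rewrite (identP 1%g) //; congr (_ * _).
    by apply: eq_bigr => i _; rewrite mul1g.
  have E1 : epsG * s * epsG = epsG * s by rewrite -mulrA e1 mulrA absorb.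
  have E2 : epsG * s * epsG = s * epsG by rewrite e2 -mulrA -e4 absorb.
  by rewrite -E1 E2.
have comm_all : forall a, epsG * a = a * epsG.
  move=> a; have [n [hs [x [Hx ->]]]] := Hsum a I.
  rewrite mulr_sumr mulr_suml; apply: eq_bigr => i _; exact: (comm_hom _ _ (Hx i)).
have key : forall a b, epsG * a * (epsG * b) = epsG * (a * b).
  by move=> a b; rewrite -mulrA [a * _]mulrA -comm_all !mulrA idem.
split.
  split.
    split.
    - split.
      + by exists 0; rewrite mulr0.
      + by exists 1; rewrite mulr1.
      + by move=> _ _ [s1 [_ ->]] [s2 [_ ->]]; exists (s1 - s2); rewrite mulrBr.
      + by move=> _ _ [s1 [_ ->]] [s2 [_ ->]]; exists (s1 * (epsG * s2)); split=> //; rewrite !mulrA.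
      + move=> _ [s1 [_ ->]]; split; first by rewrite mulrA idem.
        by rewrite -mulrA -comm_all mulrA idem.
    - move=> g; have [H0 Hs _] := Hcomp g; split.
      + by exists 0; rewrite mulr0.
      + by move=> _ _ [s1 [H1 ->]] [s2 [H2 ->]]; exists (s1 - s2); rewrite mulrBr; split=> //; apply: Hs.
      + by move=> _ [s1 [_ ->]]; exists s1.
    - move=> g h _ _ [s1 [H1 ->]] [s2 [H2 ->]]; exists (s1 * s2); rewrite key; split=> //.
      exact: Hmul.
    - move=> _ [s [_ ->]]; have [n [hs [x [Hx ->]]]] := Hsum s I.
      exists n, hs, (fun i => epsG * x i); split; last by rewrite mulr_sumr.
      by move=> i; exists (x i).
    - move=> n hs x inj Hx H0 i; apply: (Hdir n hs x inj) => // j.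
      by have [s [Hs ->]] := Hx j; apply: eGS.
  move=> g h z; split.
    move=> [s [Hs ->]].
    have [[m [a [b [Hab Hs']]]] _ _] := Heps g.
    exists m, (fun i => epsG * a i), (fun i => epsG * (b i * s)); split.
      move=> i; have [Ha Hb] := Hab i; split; first by exists (a i).
      exists (b i * s); split=> //.
      by have := Hmul _ _ _ _ Hb Hs; rewrite mulgA mulVg mul1g.
    rewrite {1}(Hle g) Hs' -mulrA mulr_suml mulr_sumr; apply: eq_bigr => i _.
    by rewrite key !mulrA.
  move=> [n [a [b [Hab ->]]]].
  apply: sum_closed.
  - by exists 0; rewrite mulr0; split=> //; have [] := Hcomp (g * h)%g.
  - move=> _ _ [s1 [H1 ->]] [s2 [H2 ->]]; exists (s1 - s2); rewrite mulrBr; split=> //.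
    by have [_ Hs _] := Hcomp (g * h)%g; apply: Hs.
  - move=> i; have [[s1 [H1 ->]] [s2 [H2 ->]]] := Hab i.
    exists (s1 * s2); rewrite key; split=> //; exact: Hmul.
move=> Hcp g; have [s [t [Hs Ht Est Ets]]] := Hcp g.
exists (epsG * s), (epsG * t); split.
- by exists s.
- by exists t.
- by rewrite key Est -Hle.
- by rewrite key Ets -Hle.
Qed.
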